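(* Assume that \[ \sum_{i\geq j\geq 0}2^{-(i+j)}h_{i,j}(t)\geq 1/2 \] for all integers $t\geq 1$. Then $\tilde c_t\leq 1/2\leq c_t$ holds for all integers $t\geq 1$.
   Context: $s(n)$ denotes the binary sum of digits of $n\ge0$. For $t\ge0$, $c_t$ (resp. $\tilde c_t$) is the asymptotic density of $\{n\ge0: s(n+t)\ge s(n)\}$ (resp. $\{n\ge 0: s(n+t)>s(n)\}$). A hyperbinary expansion of a nonnegative integer $n$ is a sequence $(\varepsilon_{\nu-1},\ldots,\varepsilon_0)\in \{0,1,2\}^{\nu}$ ($\nu\ge0$) with $\sum_{0\leq i<\nu}\varepsilon_i2^i=n$; it is proper if $\nu=0$ or $\varepsilon_{\nu-1}\neq 0$. For $i,j\ge0$ and $t\ge1$, $h_{i,j}(t)$ is the number of proper hyperbinary expansions of $t-1$ having exactly $i$ digits equal to $2$ and exactly $j$ digits equal to $0$. *)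

(* Defs.v *)
From HB Require Import structures.
From mathcomp Require Import all_boot all_order all_algebra.
From mathcomp Require Import all_classical all_reals all_analysis.
Set Implicit Arguments. Unset Strict Implicit. Unset Printing Implicit Defensive.
Import Order.TTheory GRing.Theory Num.Theory.
Import numFieldNormedType.Exports.
Local Open Scope classical_set_scope.

(* s(n): binary sum of digits of n.  Digit k of n is odd (n %/ 2^k);
   positions k <= n suffice since n < 2^(n+1). *)
Definition s (n : nat) : nat := \sum_(k < n.+1) odd (n %/ 2 ^ k).

(* A hyperbinary expansion of length nu, stored little-endian:
   e`_k = epsilon_k, digits in 'I_3 = {0,1,2}. *)
Definition hb_value (nu : nat) (e : nu.-tuple 'I_3) : nat :=
  \sum_(k < nu) (tnth e k : nat) * 2 ^ k.

Definition hb_proper (nu : nat) (e : nu.-tuple 'I_3) : bool :=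
  (nu == 0%N) || (nth 0%N [seq val x | x <- e] nu.-1 != 0%N).

(* h_{i,j}(t): number of proper hyperbinary expansions of t-1 with exactly
   i digits equal to 2 and j digits equal to 0.  A proper expansion of m of
   length nu >= 1 satisfies 2^(nu-1) <= m, hence nu <= m; so all proper
   expansions of t-1 have length nu < t (nu <= t-1), and we count over all
   lengths nu < t.+1 (a harmless superset). *)
Definition h (i j t : nat) : nat :=
  \sum_(nu < t.+1)
    #|[pred e : nu.-tuple 'I_3 |
        [&& hb_proper e, hb_value e == t.-1,
            count (fun x : 'I_3 => val x == 2%N) e == i &
            count (fun x : 'I_3 => val x == 0%N) e == j]]|.

Definition prop_below {R : realType} (P : pred nat) (N : nat) : R :=
  ((count P (iota 0 N))%:R / N%:R)%R.

Definition has_density {R : realType} (P : pred nat) (c : R) : Prop :=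
  (fun N : nat => prop_below P N) @ \oo --> c.

Definition hsum {R : realType} (t : nat) : \bar R :=
  (\sum_(i <oo) (\sum_(j < i.+1) (2%:R ^- (i + j) * (h i j t)%:R : R))%:E)%E.

(* Main.v *)
Require Import Defs.
From HB Require Import structures.
From mathcomp Require Import all_boot all_order all_algebra.
From mathcomp Require Import all_classical all_reals all_analysis.
From mathcomp Require Import zify ring lra.
Import Order.TTheory GRing.Theory Num.Theory.
Import numFieldNormedType.Exports.
Set Implicit Arguments. Unset Strict Implicit. Unset Printing Implicit Defensive.

Local Close Scope ring_scope.
Local Close Scope classical_set_scope.

Definition cntP (nu v i j : nat) : nat :=
  #|[pred e : nu.-tuple 'I_3 |
        [&& hb_proper e, hb_value e == v,
            count (fun x : 'I_3 => val x == 2%N) e == i &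
            count (fun x : 'I_3 => val x == 0%N) e == j]]|.

Lemma hb_value_cons nu (x : 'I_3) (e : nu.-tuple 'I_3) :
  hb_value [tuple of x :: e] = x + 2 * hb_value e.
Proof.
rewrite /hb_value big_ord_recl tnth0 expn0 muln1; congr (_ + _).
rewrite big_distrr /=; apply: eq_bigr => k _.
by rewrite tnthS expnS mulnCA.
Qed.

Lemma hb_proper_cons nu (x : 'I_3) (e : nu.-tuple 'I_3) :
  hb_proper [tuple of x :: e] = (if nu is 0 then val x != 0%N else hb_proper e).
Proof.
by rewrite /hb_proper /=; case: nu e => [|n] e //=.
Qed.

Lemma hb_value_lb nu (e : nu.-tuple 'I_3) :
  hb_proper e -> (0 < nu)%N -> (2 ^ nu.-1 <= hb_value e)%N.
Proof.
case: nu e => [|n] e // /orP [//|] hn _.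
rewrite /hb_value big_ord_recr /=.
apply: leq_trans (leq_addl _ _).
have : (0 < tnth e ord_max)%N.
  move: hn; rewrite (tnth_nth (tnth_default e ord_max)) /=.
  rewrite (nth_map (tnth_default e ord_max)) ?size_tuple //.
  by rewrite lt0n.
by case: (tnth e ord_max : nat) => // k _; rewrite mulSn leq_addr.
Qed.

Lemma cntP_big nu v i j : (v < nu)%N -> cntP nu v i j = 0%N.
Proof.
move=> hv; apply: eq_card0 => e; rewrite !inE.
apply/negP => /and4P [hp /eqP hval _ _].
have := hb_value_lb hp (leq_ltn_trans (leq0n v) hv).
rewrite hval => H.
have := ltn_expl nu.-1 (isT : (1 < 2)%N).
lia.
Qed.

Lemma card_cons nu (P : pred (nu.+1.-tuple 'I_3)) :
  #|P| = (\sum_(x : 'I_3) #|[pred e : nu.-tuple 'I_3 | P [tuple of x :: e]]|)%N.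
Proof.
rewrite -sum1_card.
pose f := fun p : 'I_3 * nu.-tuple 'I_3 => [tuple of p.1 :: p.2].
pose g := fun t : nu.+1.-tuple 'I_3 => (thead t, [tuple of behead t]).
have fK : cancel f g.
  by move=> [x e]; rewrite /f /g /= theadE; congr pair; apply: val_inj.
have gK : cancel g f.
  by move=> t; rewrite /f /g /=; apply/esym/tuple_eta.
rewrite (reindex f); last by exists g => ? _.
under [RHS]eq_bigr => x _ do rewrite -sum1_card.
rewrite pair_big_dep /=; apply: eq_bigl => -[x e] /=.
by rewrite inE.
Qed.

Lemma card_tuple0 (P : pred (0.-tuple 'I_3)) : #|P| = P [tuple].
Proof.
have [H|H] := boolP (P [tuple]).
  apply: (@fintype.eq_card1 _ [tuple]) => e; rewrite (tuple0 e).
  have -> : (([tuple] : 0.-tuple 'I_3) \in pred1 [tuple]) = true by apply/eqP.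
  exact/idP.
by apply: eq_card0 => e; rewrite (tuple0 e); apply/negbTE.
Qed.

Lemma cntP0 v i j : cntP 0 v i j = [&& v == 0%N, i == 0%N & j == 0%N].
Proof.
rewrite /cntP card_tuple0 /= /hb_value big_ord0 /=.
by rewrite eq_sym; case: (v == 0%N); rewrite /= ?andbF // eq_sym; congr andb; apply: eq_sym.
Qed.

Lemma cntP_cons nu v i j : (0 < v)%N ->
  cntP nu.+1 v i j = (\sum_(x : 'I_3) #|[pred e : nu.-tuple 'I_3 |
     [&& hb_proper e, (x + 2 * hb_value e == v),
         ((val x == 2%N) + count (fun y : 'I_3 => val y == 2%N) e == i) &
         ((val x == 0%N) + count (fun y : 'I_3 => val y == 0%N) e == j)]]|)%N.
Proof.
move=> v0; rewrite /cntP card_cons; apply: eq_bigr => x _.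
apply: eq_card => e; rewrite !inE hb_value_cons hb_proper_cons /=.
case: nu e => [|n] e //.
rewrite /hb_proper /hb_value big_ord0 muln0 addn0 /=.
have [hx|hx] := eqVneq (val x) 0%N; last by [].
by rewrite hx /=; case: v v0.
Qed.

Lemma cntP_odd nu w i j : cntP nu.+1 (2 * w).+1 i j = cntP nu w i j.
Proof.
rewrite cntP_cons // !big_ord_recl big_ord0 /=.
rewrite (_ : forall n, bump 0 n = n.+1) // addn0.
rewrite (eq_card0 (A := [pred e : nu.-tuple 'I_3 | _])); last first.
  by move=> e; rewrite !inE; apply/negP => /and4P [_ /eqP H _ _]; lia.
rewrite (eq_card0 (A := [pred e : nu.-tuple 'I_3 | [&& _, 2 + _ == _, _ & _]])); last first.
  by move=> e; rewrite !inE; apply/negP => /and4P [_ /eqP H _ _]; lia.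
rewrite add0n addn0; apply: eq_card => e; rewrite !inE /=.
by rewrite (_ : (1 + 2 * hb_value e == (2 * w).+1) = (hb_value e == w)) //; apply/eqP/eqP; lia.
Qed.

Lemma cntP_even nu w i j : (0 < w)%N -> cntP nu.+1 (2 * w) i j =
  ((if j is j'.+1 then cntP nu w i j' else 0) +
   (if i is i'.+1 then cntP nu w.-1 i' j else 0))%N.
Proof.
move=> w0; rewrite cntP_cons ?muln_gt0 // !big_ord_recl big_ord0 /=.
rewrite (_ : forall n, bump 0 n = n.+1) // addn0.
rewrite (eq_card0 (A := [pred e : nu.-tuple 'I_3 | [&& _, 1 + _ == _, _ & _]])); last first.
  by move=> e; rewrite !inE; apply/negP => /and4P [_ /eqP H _ _]; lia.
rewrite add0n; congr addn.
  case: j => [|j].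
    by apply: eq_card0 => e; rewrite !inE /= ?add0n ?add1n /= !andbF.
  apply: eq_card => e; rewrite !inE /= ?add0n ?add1n eqSS.
  by rewrite (_ : (2 * hb_value e == 2 * w) = (hb_value e == w)) //; apply/eqP/eqP; lia.
case: i => [|i].
  by apply: eq_card0 => e; rewrite !inE /= ?add0n ?add1n /= !andbF.
apply: eq_card => e; rewrite !inE /= ?add0n ?add1n eqSS.
by rewrite (_ : (2 + 2 * hb_value e == 2 * w) = (hb_value e == w.-1)) //; apply/eqP/eqP; lia.
Qed.

Definition hh (L v i j : nat) : nat := (\sum_(nu < L) cntP nu v i j)%N.

Lemma hE i j t : h i j t = hh t.+1 t.-1 i j.
Proof. by []. Qed.

Lemma hh_stable L v i j : (v < L)%N -> hh L v i j = hh v.+1 v i j.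
Proof.
move=> /subnKC <-; elim: (L - v.+1)%N => [|k IH]; first by rewrite addn0.
by rewrite addnS /hh big_ord_recr /= -/(hh _ _ _ _) IH cntP_big ?addn0 //; lia.
Qed.

Lemma hh_succ L v i j : (0 < v)%N -> hh L.+1 v i j = (\sum_(nu < L) cntP nu.+1 v i j)%N.
Proof.
move=> v0; rewrite /hh big_ord_recl cntP0.
by case: v v0.
Qed.

Lemma pind (P : nat -> Prop) : P 1%N -> (forall m, (0 < m)%N -> P m -> P (2 * m)%N) ->
  (forall m, (0 < m)%N -> P m -> P m.+1 -> P (2 * m).+1) -> forall t, (0 < t)%N -> P t.
Proof.
move=> P1 Pe Po; elim/ltn_ind => t IH t0.
have [->|t1] := eqVneq t 1%N; first by [].
have := odd_double_half t; case: (odd t) => /= ht.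
  rewrite -ht -muln2 mulnC; apply: Po; try (apply: IH; lia); lia.
rewrite -ht add0n -muln2 mulnC; apply: Pe; try (apply: IH; lia); lia.
Qed.

Lemma h_even i j m : (0 < m)%N -> h i j (2 * m) = h i j m.
Proof.
move=> m0; rewrite !hE.
have -> : (2 * m).-1 = (2 * m.-1).+1 by lia.
rewrite hh_succ // (eq_bigr (fun nu : 'I_(2 * m) => cntP nu m.-1 i j)); last by move=> nu _; rewrite cntP_odd.
rewrite -/(hh _ _ _ _) hh_stable; last by lia.
by rewrite [in RHS]hh_stable //; lia.
Qed.

Lemma h_odd i j m : (0 < m)%N -> h i j (2 * m).+1 =
  ((if i is i'.+1 then h i' j m else 0) + (if j is j'.+1 then h i j' m.+1 else 0))%N.
Proof.
move=> m0; rewrite !hE /=.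
rewrite hh_succ ?muln_gt0 //.
under eq_bigr => nu _ do rewrite cntP_even //.
rewrite big_split /= addnC.
congr addn.
  case: i => [|i]; first by rewrite big1.
  rewrite -/(hh _ _ _ _) hh_stable; last by lia.
  by rewrite hE hh_stable //; lia.
case: j => [|j]; first by rewrite big1.
rewrite -/(hh _ _ _ _) hh_stable; last by lia.
by rewrite hE hh_stable //; lia.
Qed.

Lemma h_one i j : h i j 1 = [&& i == 0%N & j == 0%N].
Proof.
rewrite hE /hh big_ord_recr big_ord1 /= cntP0 cntP_big //.
by rewrite addn0.
Qed.

Lemma h_supp t : (0 < t)%N -> forall i j, (t <= i)%N || (t <= j)%N -> h i j t = 0%N.
Proof.
elim/pind => [i j| m m0 IH i j | m m0 IH1 IH2 i j] H.
- by rewrite h_one; case: i H => [|i]; case: j => [|j].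
- rewrite h_even // IH //; lia.
- rewrite h_odd //; case: i H => [|i]; case: j => [|j] H //=; rewrite ?IH1 ?IH2 //; lia.
Qed.

Local Close Scope ring_scope.
Local Close Scope classical_set_scope.
Local Open Scope ring_scope.

Definition Gf (R : realType) (t : nat) (d : int) (i j : nat) : R :=
  if d <= i%:Z - j%:Z then 2%:R ^- (i + j) * (h i j t)%:R else 0.

Definition G (R : realType) (B1 B2 t : nat) (d : int) : R :=
  \sum_(i < B1) \sum_(j < B2) Gf R t d i j.

Definition T (R : realType) (t : nat) (d : int) : R := G R t t t d.

Lemma sum_trunc (R : realType) (f : nat -> R) B0 B : (B0 <= B)%N ->
  (forall i, (B0 <= i)%N -> f i = 0) -> \sum_(i < B) f i = \sum_(i < B0) f i.
Proof.
move=> /subnKC <- f0; elim: (B - B0)%N => [|k IH]; first by rewrite addn0.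
by rewrite addnS big_ord_recr /= IH f0 ?addr0 // leq_addr.
Qed.

Lemma G_trunc (R : realType) B1 B2 t d : (0 < t)%N -> (t <= B1)%N -> (t <= B2)%N ->
  G R B1 B2 t d = T R t d.
Proof.
move=> t0 h1 h2; rewrite /T /G (sum_trunc (f := fun i => \sum_(j < B2) Gf R t d i j) h1).
  apply: eq_bigr => i _; apply: (sum_trunc (f := fun j => Gf R t d i j) h2) => j hj.
  by rewrite /Gf h_supp ?hj ?orbT // mulr0 if_same.
move=> i hi; apply: big1 => j _; rewrite /Gf h_supp ?hi //.
by rewrite mulr0 if_same.
Qed.

Lemma T_one (R : realType) d : T R 1 d = if d <= 0 then 1 else 0.
Proof.
rewrite /T /G !big_ord1 /Gf h_one /= subr0 expr0 invr1 mul1r.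
by [].
Qed.

Lemma T_even (R : realType) m d : (0 < m)%N -> T R (2 * m) d = T R m d.
Proof.
move=> m0; rewrite {1}/T /G.
under eq_bigr => i _ do under eq_bigr => j _ do rewrite /Gf h_even // -/(Gf R m d i j).
rewrite -/(G R _ _ m d) G_trunc //; lia.
Qed.

Lemma halfE (R : realType) n : (2%:R ^- n.+1 : R) = 2^-1 * 2%:R ^- n.
Proof. by rewrite exprS invfM. Qed.

Lemma Gf_odd (R : realType) m d i j : (0 < m)%N ->
  Gf R (2 * m).+1 d i j =
  (if i is i'.+1 then 2^-1 * Gf R m (d - 1) i' j else 0) +
  (if j is j'.+1 then 2^-1 * Gf R m.+1 (d + 1) i j' else 0).
Proof.
move=> m0; rewrite /Gf h_odd //.
case: i => [|i]; case: j => [|j]; rewrite ?add0r ?addr0 ?add0n ?addn0 /=.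
- by rewrite mulr0 if_same.
- case: ifP => c1; case: ifP => c2; try (exfalso; lia).
    by rewrite halfE mulrA.
  by rewrite mulr0.
- case: ifP => c1; case: ifP => c2; try (exfalso; lia).
    by rewrite halfE mulrA.
  by rewrite mulr0.
- case: ifP => c1; case: ifP => c2; case: ifP => c3; try (exfalso; lia).
    rewrite natrD mulrDr; congr (_ + _).
      by rewrite addSn halfE mulrA.
    by rewrite addnS halfE mulrA.
  by rewrite !mulr0 addr0.
Qed.

Lemma T_odd (R : realType) m d : (0 < m)%N ->
  T R (2 * m).+1 d = 2^-1 * T R m (d - 1) + 2^-1 * T R m.+1 (d + 1).
Proof.
move=> m0; rewrite {1}/T /G.
under eq_bigr => i _ do under eq_bigr => j _ do rewrite Gf_odd //.
under eq_bigr => i _ do rewrite big_split /=.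
rewrite big_split /=; congr (_ + _).
  rewrite big_ord_recl /= big1 // add0r.
  under eq_bigr => i _ do rewrite -mulr_sumr.
  rewrite -mulr_sumr -/(G R _ _ m (d - 1)) G_trunc //; lia.
under eq_bigr => i _ do rewrite big_ord_recl /= add0r -mulr_sumr.
rewrite -mulr_sumr -/(G R _ _ m.+1 (d + 1)) G_trunc //; lia.
Qed.

Lemma T_bounds (R : realType) t : (0 < t)%N -> forall d, 0 <= T R t d <= 1.
Proof.
elim/pind => [d|m m0 IH d|m m0 IH1 IH2 d].
- by rewrite T_one; case: ifP => _; rewrite ?lexx ?ler01.
- by rewrite T_even.
- rewrite T_odd //; move: (IH1 (d - 1)) (IH2 (d + 1)) => /andP [a1 a2] /andP [b1 b2].
  apply/andP; split; lra.
Qed.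

Lemma T_mul2 (R : realType) t K d : (0 < t)%N -> T R (t * 2 ^ K)%N d = T R t d.
Proof.
move=> t0; elim: K => [|K IH]; first by rewrite muln1.
by rewrite expnS mulnCA T_even // muln_gt0 t0 expn_gt0.
Qed.

Definition S (R : realType) (K t : nat) (d : int) : R :=
  \sum_(g < K) 2%:R ^- g.+1 * T R t (d - 1 + g%:Z).

Lemma S_rec (R : realType) K t d :
  S R K.+1 t d = 2^-1 * T R t (d - 1) + 2^-1 * S R K t (d + 1).
Proof.
rewrite /S big_ord_recl /= expr1 addr0; congr (_ + _).
rewrite mulr_sumr; apply: eq_bigr => g _ /=.
rewrite halfE mulrA; congr (_ * T R t _); rewrite /bump /= ?add1n; lia.
Qed.

Lemma T_Y (R : realType) t K d : (0 < t)%N ->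
  T R (t * 2 ^ K)%N.+1 d = S R K t d + 2%:R ^- K * T R t.+1 (d + K%:Z).
Proof.
move=> t0; elim: K d => [|K IH] d.
  by rewrite muln1 /S big_ord0 add0r expr0 invr1 mul1r addr0.
rewrite expnS mulnCA T_odd ?muln_gt0 ?t0 ?expn_gt0 // T_mul2 // IH S_rec halfE.
rewrite mulrDr addrA !mulrA; congr (_ + _ * T R t.+1 _); lia.
Qed.

Definition V (R : realType) (K v : nat) (d : int) : R :=
  \sum_(g < K) 2%:R ^- g.+1 * T R v (d + 1 - g%:Z).

Lemma V_rec (R : realType) K v d :
  V R K.+1 v d = 2^-1 * T R v (d + 1) + 2^-1 * V R K v (d - 1).
Proof.
rewrite /V big_ord_recl /= expr1 subr0; congr (_ + _).
rewrite mulr_sumr; apply: eq_bigr => g _ /=.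
rewrite halfE mulrA; congr (_ * T R v _); rewrite /bump /= ?add1n; lia.
Qed.

Lemma T_V (R : realType) v K d : (2 <= v)%N ->
  T R (v * 2 ^ K)%N.-1 d = V R K v d + 2%:R ^- K * T R v.-1 (d - K%:Z).
Proof.
move=> v2; elim: K d => [|K IH] d.
  by rewrite muln1 /V big_ord0 add0r expr0 invr1 mul1r subr0.
have pk : (0 < 2 ^ K)%N by rewrite expn_gt0.
have e : (v * 2 ^ K.+1).-1 = (2 * (v * 2 ^ K).-1).+1 by rewrite expnS; nia.
have p : (0 < (v * 2 ^ K).-1)%N by nia.
rewrite e T_odd // IH.
have -> : (((v * 2 ^ K).-1).+1 = v * 2 ^ K)%N by nia.
rewrite T_mul2 ?(leq_trans _ v2) // V_rec halfE mulrDr !mulrA.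
rewrite (_ : d - K.+1%:Z = d - 1 - K%:Z); last by lia.
lra.
Qed.

Lemma T_pow2 (R : realType) k d : T R (2 ^ k)%N d = T R 1 d.
Proof. by rewrite -(mul1n (2 ^ k)%N) T_mul2. Qed.

Lemma T_refl (R : realType) k t d : (2 ^ k <= t <= 2 ^ k.+1)%N ->
  T R (3 * 2 ^ k - t)%N d = 1 - T R t (1 - d).
Proof.
elim: k t d => [|k IH] t d.
  rewrite expn0 expn1 => /andP [h1 h2].
  have [->|->] : t = 1%N \/ t = 2%N by lia.
    rewrite (_ : (3 * 1 - 1 = 2 ^ 1)%N) // T_pow2 !T_one.
    by case: ifP => c1; case: ifP => c2 //; try (exfalso; lia); rewrite ?subrr ?subr0.
  rewrite (_ : (3 * 1 - 2 = 1)%N) // (_ : 2%N = 2 ^ 1)%N // T_pow2 !T_one.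
  by case: ifP => c1; case: ifP => c2 //; try (exfalso; lia); rewrite ?subrr ?subr0.
move=> /andP [h1 h2].
have pk : (0 < 2 ^ k)%N by rewrite expn_gt0.
have := odd_double_half t; case: (odd t) => /= ht.
  have {ht} ht : t = (2 * t./2).+1 by rewrite -{1}ht add1n -muln2 mulnC.
  set m := t./2 in ht.
  have hm : (2 ^ k <= m)%N by rewrite !expnS in h1 h2; lia.
  have hm2 : (m.+1 <= 2 ^ k.+1)%N by rewrite !expnS in h1 h2 *; lia.
  have e : (3 * 2 ^ k.+1 - t = (2 * (3 * 2 ^ k - m.+1)).+1)%N by rewrite !expnS in hm2 *; lia.
  rewrite e ht !T_odd; try lia.
  have -> : ((3 * 2 ^ k - m.+1).+1 = 3 * 2 ^ k - m)%N by rewrite !expnS in hm2 *; lia.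
  rewrite IH; last by apply/andP; split; lia.
  rewrite IH; last by apply/andP; split; lia.
  rewrite (_ : 1 - (d - 1) = 1 - d + 1); last by lia.
  rewrite (_ : 1 - (d + 1) = 1 - d - 1); last by lia.
  lra.
have {ht} ht : t = (2 * t./2)%N by rewrite -{1}ht add0n -muln2 mulnC.
set m := t./2 in ht.
have hm : (2 ^ k <= m <= 2 ^ k.+1)%N by rewrite !expnS in h1 h2 *; apply/andP; split; lia.
have e : (3 * 2 ^ k.+1 - t = 2 * (3 * 2 ^ k - m))%N by rewrite !expnS in hm *; lia.
rewrite e ht !T_even; try lia.
exact: IH.
Qed.

Local Close Scope ring_scope.
Local Close Scope classical_set_scope.
Local Open Scope ring_scope.

Lemma hsumE (R : realType) t : (0 < t)%N -> hsum (R := R) t = (T R t 0)%:E.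
Proof.
move=> t0; rewrite /hsum.
rewrite (@nneseries_split R _ 0 t); last first.
  move=> k _; rewrite lee_fin; apply: sumr_ge0 => j _; apply: mulr_ge0; last by [].
  by rewrite invr_ge0 exprn_ge0.
rewrite eseries0 ?adde0; last first.
  move=> i hi _; rewrite big1 // => j _; rewrite h_supp ?mulr0 //.
  by rewrite add0n in hi; rewrite hi.
rewrite sumEFin add0n big_mkord /T /G; congr (_%:E); apply: eq_bigr => i _.
rewrite (big_ord_widen t (fun j => 2%:R ^- (i + j) * (h i j t)%:R : R)) //.
rewrite big_mkcond; apply: eq_bigr => j _; rewrite /Gf.
rewrite (_ : (0 <= i%:Z - j%:Z) = (j < i.+1)%N) //; apply/idP/idP; lia.
Qed.

Local Close Scope ring_scope.
Local Close Scope classical_set_scope.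

Lemma sum_truncn (f : nat -> nat) B0 B : (B0 <= B)%N ->
  (forall i, (B0 <= i)%N -> f i = 0%N) -> (\sum_(i < B) f i = \sum_(i < B0) f i)%N.
Proof.
move=> /subnKC <- f0; elim: (B - B0)%N => [|k IH]; first by rewrite addn0.
by rewrite addnS big_ord_recr /= IH f0 ?addn0 // leq_addr.
Qed.

Lemma sB n B : (n <= B)%N -> s n = (\sum_(k < B) odd (n %/ 2 ^ k))%N.
Proof.
move=> nB; rewrite /s (sum_truncn (f := fun k => odd (n %/ 2 ^ k)) (B0 := n)) //.
  rewrite [RHS](sum_truncn (f := fun k => odd (n %/ 2 ^ k)) (B0 := n)) // => i hi.
  by rewrite divn_small // (leq_trans (ltn_expl n (isT : (1 < 2)%N))) // leq_pexp2l.
move=> i hi.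
by rewrite divn_small // (leq_trans (ltn_expl n (isT : (1 < 2)%N))) // leq_pexp2l.
Qed.

Lemma s0 : s 0 = 0%N.
Proof. by rewrite /s big_ord1. Qed.

Lemma s_double n : s (2 * n) = s n.
Proof.
rewrite (sB (B := (2 * n).+1)) ?leqnSn // (sB (B := 2 * n)) ?leq_pmull //.
rewrite big_ord_recl /= expn0 divn1 oddM /= add0n; apply: eq_bigr => k _.
by rewrite /bump /= add1n expnS divnMl.
Qed.

Lemma s_odd n : s (2 * n).+1 = (s n).+1.
Proof.
rewrite (sB (B := (2 * n).+1)) ?leqnSn // (sB (B := 2 * n)) ?leq_pmull //.
rewrite big_ord_recl /= expn0 divn1.
rewrite (_ : odd (2 * n).+1 = true); last by rewrite /= oddM.
rewrite add1n; congr (_.+1); apply: eq_bigr => k _.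
rewrite /bump /= add1n expnS divnMA; congr (odd (_ %/ _)).
by rewrite -[(2 * n).+1]addn1 mulnC divnMDl // divn_small // addn0.
Qed.

Lemma s_add M q r : (r < 2 ^ M)%N -> s (q * 2 ^ M + r) = (s q + s r)%N.
Proof.
elim: M q r => [|M IH] q r hr.
  by rewrite expn0 in hr; move: hr; case: r => // _; rewrite muln1 addn0 s0 addn0.
have := odd_double_half r; case: (odd r) => /= ht.
  have e : (q * 2 ^ M.+1 + r = (2 * (q * 2 ^ M + r./2)).+1)%N by rewrite expnS; lia.
  rewrite e s_odd IH; last by rewrite expnS in hr; lia.
  have sr : s r = (s r./2).+1 by rewrite -{1}ht add1n -muln2 mulnC s_odd.
  by rewrite sr addnS.
have e : (q * 2 ^ M.+1 + r = 2 * (q * 2 ^ M + r./2))%N by rewrite expnS; lia.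
rewrite e s_double IH; last by rewrite expnS in hr; lia.
have sr : s r = s r./2 by rewrite -{1}ht add0n -muln2 mulnC s_double.
by rewrite sr.
Qed.

Local Open Scope ring_scope.

Definition Pd (t : nat) (d : int) : pred nat :=
  fun n => d <= (s (n + t))%:Z - (s n)%:Z.

Definition cnt (P : pred nat) (N : nat) : nat := count P (iota 0 N).

Definition C (R : realType) (M t : nat) (d : int) : R :=
  (cnt (Pd t d) (2 ^ M))%:R / (2 ^ M)%:R.

Lemma cnt_double (P : pred nat) N :
  cnt P (2 * N) = (cnt (fun n => P (2 * n)%N) N + cnt (fun n => P (2 * n).+1) N)%N.
Proof.
rewrite /cnt; elim: N => [|N IH] //.
have e1 : iota 0 (2 * N.+1) = iota 0 (2 * N) ++ [:: (2 * N)%N; (2 * N).+1].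
  by rewrite mulnS addnC iotaD.
have e2 : iota 0 N.+1 = iota 0 N ++ [:: N] by rewrite -addn1 iotaD.
rewrite e1 e2 !count_cat IH /=.
case: (P (2 * N)%N); case: (P (2 * N).+1); rewrite /=; lia.
Qed.

Lemma eq_cnt (P Q : pred nat) N : P =1 Q -> cnt P N = cnt Q N.
Proof. by move=> H; apply: eq_count. Qed.

Lemma C_even (R : realType) M m d : C R M.+1 (2 * m) d = C R M m d.
Proof.
rewrite /C expnS cnt_double.
rewrite (@eq_cnt _ (Pd m d)); last first.
  by move=> n; rewrite /Pd -mulnDr s_double s_double.
rewrite [X in (_ + X)%N](@eq_cnt _ (Pd m d)); last first.
  by move=> n; rewrite /Pd (_ : ((2 * n).+1 + 2 * m = (2 * (n + m)).+1)%N) ?s_odd //; lia.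
have h2 : ((2 ^ M)%:R : R) != 0 by rewrite pnatr_eq0 expn_eq0.
by rewrite addnn -muln2 !natrM; field.
Qed.

Lemma C_odd (R : realType) M m d :
  C R M.+1 (2 * m).+1 d = 2^-1 * C R M m (d - 1) + 2^-1 * C R M m.+1 (d + 1).
Proof.
rewrite /C expnS cnt_double.
rewrite (@eq_cnt _ (Pd m (d - 1))); last first.
  move=> n; rewrite /Pd (_ : (2 * n + (2 * m).+1 = (2 * (n + m)).+1)%N) ?s_odd ?s_double; last by lia.
  by apply/idP/idP; lia.
rewrite [X in (_ + X)%N](@eq_cnt _ (Pd m.+1 (d + 1))); last first.
  move=> n; rewrite /Pd (_ : ((2 * n).+1 + (2 * m).+1 = (2 * (n + m.+1)))%N) ?s_odd ?s_double; last by lia.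
  by apply/idP/idP; lia.
have h2 : ((2 ^ M)%:R : R) != 0 by rewrite pnatr_eq0 expn_eq0.
by rewrite natrD natrM; field.
Qed.

Lemma C_zero (R : realType) M d : C R M 0 d = if d <= 0 then 1 else 0.
Proof.
have h2 : ((2 ^ M)%:R : R) != 0 by rewrite pnatr_eq0 expn_eq0.
rewrite /C /cnt; case: ifP => hd.
  rewrite (eq_count (a2 := predT)); last by move=> n; rewrite /Pd addn0 subrr.
  by rewrite count_predT size_iota divff.
rewrite (eq_count (a2 := pred0)); last by move=> n; rewrite /Pd addn0 subrr hd.
by rewrite count_pred0 mul0r.
Qed.

Lemma C_bounds (R : realType) M t d : 0 <= C R M t d <= 1.
Proof.
have h2 : ((2 ^ M)%:R : R) != 0 by rewrite pnatr_eq0 expn_eq0.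
have h3 : ((0 : R) < (2 ^ M)%:R) by rewrite ltr0n expn_gt0.
apply/andP; split; first by rewrite /C divr_ge0.
rewrite /C ler_pdivrMr // mul1r ler_nat.
by rewrite /cnt (leq_trans (count_size _ _)) // size_iota.
Qed.

Lemma S_bounds0 (R : realType) K d : S R K 1 d <= 1 - 2%:R ^- K.
Proof.
elim: K d => [|K IH] d; first by rewrite /S big_ord0 expr0 invr1 subrr.
rewrite S_rec halfE T_one.
have := IH (d + 1); case: ifP => _; lra.
Qed.

Lemma S_even (R : realType) K m d : (0 < m)%N -> S R K (2 * m) d = S R K m d.
Proof. by move=> m0; apply: eq_bigr => g _; rewrite T_even. Qed.

Lemma S_odd (R : realType) K m d : (0 < m)%N ->
  S R K (2 * m).+1 d = 2^-1 * S R K m (d - 1) + 2^-1 * S R K m.+1 (d + 1).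
Proof.
move=> m0; rewrite /S !mulr_sumr -big_split; apply: eq_bigr => g _ /=.
rewrite T_odd // (_ : d - 1 + g%:Z - 1 = d - 1 - 1 + g%:Z); last by lia.
rewrite (_ : d - 1 + g%:Z + 1 = d + 1 - 1 + g%:Z); last by lia.
lra.
Qed.

Lemma SC_bound (R : realType) t : (0 < t)%N -> forall K M d, (K + t <= M.+1)%N ->
  S R K t d <= C R M t d <= S R K t d + 2%:R ^- K.
Proof.
elim/pind => [|m m0 IH|m m0 IH1 IH2] K M d hKM.
- elim: K M d hKM => [|K IHK] M d hKM.
    rewrite /S big_ord0 expr0 invr1 add0r; exact: C_bounds.
  case: M hKM => [|M] hKM; first by lia.
  rewrite -(muln0 2) C_odd C_zero S_rec T_one halfE muln0.
  have /andP [a b] := IHK M (d + 1) ltac:(lia).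
  apply/andP; split; lra.
- case: M hKM => [|M] hKM; first by lia.
  rewrite C_even S_even //; apply: IH; lia.
- case: M hKM => [|M] hKM; first by lia.
  rewrite C_odd S_odd //.
  have /andP [a b] := IH1 K M (d - 1) ltac:(lia).
  have /andP [c e] := IH2 K M (d + 1) ltac:(lia).
  apply/andP; split; lra.
Qed.

Local Close Scope ring_scope.
Local Close Scope classical_set_scope.

Lemma cnt_shift (F : pred nat) Q k r : (0 < Q)%N -> (forall n, F n = F (n %% Q)) ->
  count F (iota (k * Q) r) = cnt F r.
Proof.
move=> Q0 hF; rewrite -(addn0 (k * Q)) iotaDl count_map /cnt.
apply: eq_count => x /=; rewrite hF [in RHS]hF modnMDl //.
Qed.

Lemma cnt_periodic (F : pred nat) Q k r : (0 < Q)%N -> (forall n, F n = F (n %% Q)) ->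
  cnt F (k * Q + r) = (k * cnt F Q + cnt F r)%N.
Proof.
move=> Q0 hF; rewrite /cnt iotaD count_cat add0n (cnt_shift _ _ Q0 hF); congr addn.
elim: k => [|k IH]; first by rewrite mul0n.
by rewrite mulSnr iotaD count_cat IH add0n (cnt_shift _ _ Q0 hF) mulSnr.
Qed.

Lemma cnt_le (F : pred nat) N : (cnt F N <= N)%N.
Proof. by rewrite /cnt (leq_trans (count_size _ _)) // size_iota. Qed.

Lemma cnt_sub (F G : pred nat) N : (forall n, F n -> G n) -> (cnt F N <= cnt G N)%N.
Proof. by move=> H; apply: sub_count => n; apply: H. Qed.

Lemma cnt_U (F G H : pred nat) N : (forall n, F n -> G n || H n) ->
  (cnt F N <= cnt G N + cnt H N)%N.
Proof.
move=> hF; rewrite /cnt -count_predUI.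
apply: leq_trans (leq_addr _ _); apply: sub_count => n /=; exact: hF.
Qed.

Lemma Pd_per M t d n : ((n %% 2 ^ M) + t < 2 ^ M)%N -> Pd t d n = Pd t d (n %% 2 ^ M).
Proof.
move=> h; rewrite /Pd {1 2}(divn_eq n (2 ^ M)) -addnA !s_add ?ltn_pmod ?expn_gt0 //.
congr (_ <= _)%R; rewrite !PoszD; lia.
Qed.

Lemma count_bounds M t d N : (t <= 2 ^ M)%N ->
  let Q := (2 ^ M)%N in let k := (N %/ Q)%N in
  (k * cnt (Pd t d) Q <= cnt (Pd t d) N + k * t)%N /\
  (cnt (Pd t d) N <= k * cnt (Pd t d) Q + k * t + 2 * Q)%N.
Proof.
move=> tQ0 Q k.
have tQ : (t <= Q)%N by [].
have Q0 : (0 < Q)%N by rewrite expn_gt0.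
pose B := fun n => ((n %% Q) + t < Q)%N && Pd t d (n %% Q).
pose E := fun n => (Q <= (n %% Q) + t)%N.
have Bper : forall n, B n = B (n %% Q) by move=> n; rewrite /B modn_mod.
have Eper : forall n, E n = E (n %% Q) by move=> n; rewrite /E modn_mod.
have BP : forall n, B n -> Pd t d n by move=> n /andP [h1 h2]; rewrite (@Pd_per M).
have PBE : forall n, Pd t d n -> B n || E n.
  move=> n hn; rewrite /B /E; case: ltnP => //= h; rewrite orbF -(@Pd_per M) //.
have EQ : (cnt E Q <= t)%N.
  rewrite /cnt -(subnK tQ) iotaD count_cat add0n.
  rewrite (@eq_in_count _ E pred0); last first.
    move=> b; rewrite mem_iota add0n => /andP [_ hb]; rewrite /E modn_small; last by lia.
    by apply/negbTE; rewrite -ltnNge; lia.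
  by rewrite count_pred0 add0n (leq_trans (count_size _ _)) // size_iota.
have eN : N = (k * Q + N %% Q)%N by apply: divn_eq.
have rQ : (N %% Q < Q)%N by rewrite ltn_pmod.
split.
  have := cnt_U Q PBE; have := cnt_sub N BP.
  rewrite [in cnt B N]eN cnt_periodic // => h1 h2.
  have := leq_mul (leqnn k) h2 => h3.
  have h4 := leq_mul (leqnn k) EQ.
  nia.
have := cnt_U N PBE; rewrite [in cnt B N]eN [in cnt E N]eN !cnt_periodic // => h1.
have h2 := cnt_sub Q BP.
have := cnt_le B (N %% Q); have := cnt_le E (N %% Q) => h3 h4.
have h5 := leq_mul (leqnn k) h2.
have h6 := leq_mul (leqnn k) EQ.
nia.
Qed.

Local Open Scope ring_scope.

Lemma dens_bound (R : realType) M t d N : (t <= 2 ^ M)%N -> (0 < N)%N ->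
  C R M t d - t%:R / (2 ^ M)%:R - (2 ^ M)%:R / N%:R <= prop_below (R := R) (Pd t d) N /\
  prop_below (R := R) (Pd t d) N <= C R M t d + t%:R / (2 ^ M)%:R + 2 * (2 ^ M)%:R / N%:R.
Proof.
move=> tQ N0.
have [ha hb] := count_bounds d N tQ.
move: ha hb.
set Q := (2 ^ M)%N; set k := (N %/ Q)%N.
rewrite /prop_below /C -/(cnt _ _) -/Q.
set x := cnt (Pd t d) N; set y := cnt (Pd t d) Q.
move=> ha hb.
have Q0 : (0 < Q)%N by rewrite expn_gt0.
have kN : (k * Q <= N)%N by apply: leq_trunc_div.
have Nk : (N < k * Q + Q)%N.
  by rewrite {1}(divn_eq N Q) ltn_add2l ltn_pmod.
have yQ : (y <= Q)%N by apply: cnt_le.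
have ra : (k%:R * y%:R <= x%:R + k%:R * t%:R :> R).
  by move: ha; rewrite -(ler_nat R) !natrD !natrM.
have rb : (x%:R <= k%:R * y%:R + k%:R * t%:R + 2 * Q%:R :> R).
  by move: hb; rewrite -(ler_nat R) !natrD !natrM addr0 => h; lra.
have rkN : (k%:R * Q%:R <= N%:R :> R) by rewrite -natrM ler_nat.
have rNk : (N%:R <= k%:R * Q%:R + Q%:R :> R) by rewrite -natrM -natrD ler_nat ltnW.
have ryQ : (y%:R <= Q%:R :> R) by rewrite ler_nat.
have rtQ : (t%:R <= Q%:R :> R) by rewrite ler_nat.
have rQ : (0 < Q%:R :> R) by rewrite ltr0n.
have rN : (0 < N%:R :> R) by rewrite ltr0n.
have rk : (0 <= k%:R :> R) by [].
have ry : (0 <= y%:R :> R) by [].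
have rt : (0 <= t%:R :> R) by [].
have rx : (0 <= x%:R :> R) by [].
split.
  have key : (y%:R - t%:R) * N%:R - Q%:R * Q%:R <= x%:R * Q%:R :> R.
    have [hp|hn] := lerP 0 (y%:R - t%:R : R).
      nra.
    nra.
  have -> : y%:R / Q%:R - t%:R / Q%:R - Q%:R / N%:R =
            ((y%:R - t%:R) * N%:R - Q%:R * Q%:R) / (N%:R * Q%:R) :> R.
    by field; rewrite !gt_eqF.
  rewrite ler_pdivrMr ?mulr_gt0 //.
  have -> : x%:R / N%:R * (N%:R * Q%:R) = x%:R * Q%:R :> R by field; rewrite gt_eqF.
  exact: key.
have key : x%:R * Q%:R <= (y%:R + t%:R) * N%:R + 2 * Q%:R * Q%:R :> R by nra.
have -> : y%:R / Q%:R + t%:R / Q%:R + 2 * Q%:R / N%:R =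
          ((y%:R + t%:R) * N%:R + 2 * Q%:R * Q%:R) / (N%:R * Q%:R) :> R.
  by field; rewrite !gt_eqF.
rewrite ler_pdivlMr ?mulr_gt0 //.
have -> : x%:R / N%:R * (N%:R * Q%:R) = x%:R * Q%:R :> R by field; rewrite gt_eqF.
exact: key.
Qed.

Local Close Scope ring_scope.
Local Close Scope classical_set_scope.
Local Open Scope classical_set_scope.
Local Open Scope ring_scope.

Lemma small_pow (R : realType) (a e : R) : 0 < e -> 0 <= a ->
  exists M0 : nat, forall M, (M0 <= M)%N -> a / (2 ^ M)%:R < e.
Proof.
move=> e0 a0; exists (Num.bound (a / e)) => M hM.
have h1 := archi_boundP (divr_ge0 a0 (ltW e0)).
have h2 : ((Num.bound (a / e))%:R <= (2 ^ M)%:R :> R).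
  rewrite ler_nat (leq_trans hM) // ltnW // ltn_expl //.
have hp : (0 < (2 ^ M)%:R :> R) by rewrite ltr0n expn_gt0.
rewrite ltr_pdivrMr //.
have : a / e < (2 ^ M)%:R by apply: lt_le_trans h2.
by rewrite ltr_pdivrMr // mulrC.
Qed.

Lemma small_N (R : realType) (a e : R) : 0 < e -> 0 <= a ->
  exists N0 : nat, forall N, (N0 <= N)%N -> a / N%:R < e /\ (0 < N)%N.
Proof.
move=> e0 a0; exists (Num.bound (a / e)).+1 => N hN; split; last by lia.
have h1 := archi_boundP (divr_ge0 a0 (ltW e0)).
have hp : (0 < N%:R :> R) by rewrite ltr0n; lia.
rewrite ltr_pdivrMr //.
have : a / e < N%:R by apply: lt_le_trans h1 _; rewrite ler_nat ltnW.
by rewrite ltr_pdivrMr // mulrC.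
Qed.

Lemma density (R : realType) t d : (0 < t)%N ->
  exists c : R, has_density (Pd t d) c /\
    forall M, (t <= 2 ^ M)%N -> C R M t d - t%:R / (2 ^ M)%:R <= c /\ c <= C R M t d + t%:R / (2 ^ M)%:R.
Proof.
move=> t0.
pose a := fun N : nat => prop_below (R := R) (Pd t d) N.
have ca : cvg (a @ \oo).
  apply/cauchy_cvgP; apply: cauchy_exP => e e0.
  have e2 : 0 < e / 2 by lra.
  have [M0 hM0] := small_pow e2 (ler0n R t).
  pose M := (M0 + t)%N.
  have tM : (t <= 2 ^ M)%N by apply: ltnW; apply: leq_trans (ltn_expl t (isT : (1 < 2)%N)) _; rewrite leq_pexp2l //; lia.
  have [N0 hN0] := small_N e2 (mulr_ge0 (ler0n R 2) (ler0n R (2 ^ M))).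
  exists (C R M t d); exists N0 => // N /= hN.
  have [hN1 hN2] := hN0 N hN.
  have [l u] := dens_bound R d tM hN2.
  have := hM0 M (leq_addr _ _).
  rewrite /ball /=.
  rewrite /a ltr_norml; move: l u hN1; lra.
exists (lim (a @ \oo)); split; first exact: ca.
move=> M tM; split.
  apply/ler_addgt0Pr => e e0.
  rewrite -lerBlDr.
  apply: limr_ge => //.
  have [N0 hN0] := small_N e0 (ler0n R (2 ^ M)).
  exists N0 => // N /= hN.
  have [hN1 hN2] := hN0 N hN.
  have [l u] := dens_bound R d tM hN2.
  rewrite /a; move: l hN1; lra.
apply/ler_addgt0Pr => e e0.
apply: limr_le => //.
have [N0 hN0] := small_N e0 (mulr_ge0 (ler0n R 2) (ler0n R (2 ^ M))).
exists N0 => // N /= hN.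
have [hN1 hN2] := hN0 N hN.
have [l u] := dens_bound R d tM hN2.
rewrite /a; move: u hN1; lra.
Qed.

Local Close Scope ring_scope.
Local Close Scope classical_set_scope.
Local Open Scope classical_set_scope.
Local Open Scope ring_scope.

Lemma geo_sum (R : realType) K : \sum_(g < K) (2%:R ^- g.+1 : R) = 1 - 2%:R ^- K.
Proof.
elim: K => [|K IH]; first by rewrite big_ord0 expr0 invr1 subrr.
rewrite big_ord_recr /= IH halfE; lra.
Qed.

Lemma S_lower (R : realType) t : (forall u, (0 < u)%N -> 1/2 <= T R u 0) -> (0 < t)%N ->
  forall K, 1/2 - 2%:R ^- K <= S R K t 0.
Proof.
move=> hT t0 K.
have := hT (t * 2 ^ K).+1%N isT; rewrite T_Y //.
have /andP [_ h1] := T_bounds R (ltn0Sn t) (0 + K%:Z).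
have h2 : 0 <= (2%:R ^- K : R) by rewrite invr_ge0 exprn_ge0.
have : 2%:R ^- K * T R t.+1 (0 + K%:Z) <= 2%:R ^- K by rewrite ler_piMr.
lra.
Qed.

Lemma S_upper (R : realType) t : (forall u, (0 < u)%N -> 1/2 <= T R u 0) -> (0 < t)%N ->
  forall K, S R K t 1 <= 1/2.
Proof.
move=> hT t0 K.
pose k := trunc_log 2 (2 * t).
have hk1 : (2 ^ k <= 2 * t)%N by apply: trunc_logP => //; lia.
have hk2 : (2 * t < 2 ^ k.+1)%N by apply: trunc_log_ltn.
have k1 : (1 <= k)%N.
  case: (posnP k) hk2 => [->|//]; rewrite expn1; lia.
have pk : (2 <= 2 ^ k)%N.
  by rewrite -{1}(expn1 2) leq_pexp2l.
pose v := (3 * 2 ^ k - 2 * t)%N.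
have v2 : (2 <= v)%N by rewrite /v; rewrite expnS in hk2; lia.
have hu : (0 < (v * 2 ^ K).-1)%N.
  have : (0 < 2 ^ K)%N by rewrite expn_gt0.
  nia.
have := hT _ hu; rewrite T_V //.
have v1 : (0 < v.-1)%N by lia.
have /andP [_ h1] := T_bounds R v1 (0 - K%:Z).
have h2 : 0 <= (2%:R ^- K : R) by rewrite invr_ge0 exprn_ge0.
have h3 : 2%:R ^- K * T R v.-1 (0 - K%:Z) <= 2%:R ^- K by rewrite ler_piMr.
have hV : V R K v 0 = (1 - 2%:R ^- K) - S R K t 1.
  rewrite /V /S -geo_sum -sumrB; apply: eq_bigr => g _.
  rewrite /v T_refl; last by rewrite hk1 ltnW.
  rewrite T_even // (_ : 1 - (0 + 1 - g%:Z) = 1 - 1 + g%:Z); last by lia.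
  by rewrite mulrBr mulr1.
lra.
Qed.

Lemma pow2E (R : realType) K : ((2 ^ K)%:R : R) = 2%:R ^+ K.
Proof. by rewrite natrX. Qed.

Theorem corollary3p4 (R : realType) :
  (forall t : nat, (1 <= t)%N -> ((1 / 2 : R)%:E <= hsum (R := R) t)%E) ->
  forall t : nat, (1 <= t)%N ->
    (exists c : R, has_density (fun n => s n <= s (n + t))%N c /\ (1 / 2 <= c)%R) /\
    (exists ct : R, has_density (fun n => s n < s (n + t))%N ct /\ (ct <= 1 / 2)%R).
Proof.
move=> hyp t t1.
have hT : forall u, (0 < u)%N -> 1/2 <= T R u 0.
  by move=> u u0; have := hyp u u0; rewrite hsumE // lee_fin.
split.
  have [c [hc hb]] := density R 0 t1.
  exists c; split.
    have -> : (fun n => (s n <= s (n + t))%N) = Pd t 0.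
      by apply/funext => n; rewrite /Pd; apply/idP/idP; lia.
    exact: hc.
  apply/ler_addgt0Pr => e e0.
  have e2 : 0 < e / 2 by lra.
  have [K0 hK] := small_pow e2 (@ler01 R).
  have [M0 hM] := small_pow e2 (ler0n R t).
  pose M := (M0 + K0 + t)%N.
  have tM : (t <= 2 ^ M)%N.
    apply: ltnW; apply: leq_trans (ltn_expl t (isT : (1 < 2)%N)) _; rewrite leq_pexp2l //; lia.
  have [l _] := hb M tM.
  have /andP [sc _] := @SC_bound R t t1 K0 M 0 ltac:(rewrite /M; lia).
  have sl := S_lower hT t1 K0.
  have a2 : (2%:R ^- K0 : R) < e / 2 by have := hK K0 (leqnn _); rewrite pow2E mul1r.
  have a1 := hM M ltac:(rewrite /M; lia).
  lra.
have [c [hc hb]] := density R 1 t1.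
exists c; split.
  have -> : (fun n => (s n < s (n + t))%N) = Pd t 1.
    by apply/funext => n; rewrite /Pd; apply/idP/idP; lia.
  exact: hc.
apply/ler_addgt0Pr => e e0.
have e2 : 0 < e / 2 by lra.
have [K0 hK] := small_pow e2 (@ler01 R).
have [M0 hM] := small_pow e2 (ler0n R t).
pose M := (M0 + K0 + t)%N.
have tM : (t <= 2 ^ M)%N.
  apply: ltnW; apply: leq_trans (ltn_expl t (isT : (1 < 2)%N)) _; rewrite leq_pexp2l //; lia.
have [_ u] := hb M tM.
have /andP [_ sc] := @SC_bound R t t1 K0 M 1 ltac:(rewrite /M; lia).
have su := S_upper hT t1 K0.
have a2 : (2%:R ^- K0 : R) < e / 2 by have := hK K0 (leqnn _); rewrite pow2E mul1r.
have a1 := hM M ltac:(rewrite /M; lia).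
lra.
Qed.
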